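(* Let $(e_n)$ be a uniformly quasi-greedy basic sequence in a Banach lattice $X$ with uniform quasi-greedy constant $C^\vee_{qg}$. Then for any distinct indices $n_1,\dots,n_m$ and any real numbers $a_1,\dots,a_m$, $$\Big\|\bigvee_{k=1}^m\Big|\sum_{i=1}^k a_ie_{n_i}\Big|\Big\|\le 2\max_i|a_i|\,C^\vee_{qg}\Big\|\sum_{i=1}^m e_{n_i}\Big\|.$$
   Context: Let $(e_n)$ be a semi-normalized basic sequence in a Banach lattice $X$ with span $E$ and biorthogonal functionals $e_n^*$. For $x\in E$, the natural greedy ordering $\rho$ of $x$ is the injective map $\mathbb{N}\to\mathbb{N}$ whose range contains $\{n:e_n^*(x)\ne0\}$ and which lists indices by non-increasing $|e_n^*(x)|$, ties broken by increasing index; $\mathcal{G}_m(x)=\sum_{n=1}^m e^*_{\rho(n)}(x)e_{\rho(n)}$ and $\mathcal{G}^\vee_m(x)=\bigvee_{n=1}^m|\mathcal{G}_n(x)|$. The sequence is uniformly quasi-greedy if $C^\vee_{qg}:=\sup_m\sup_{x\in E,\|x\|=1}\|\mathcal{G}^\vee_m(x)\|<\infty$; $C^\vee_{qg}$ is the uniform quasi-greedy constant. *)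

(* Defs.v *)
From HB Require Import structures.
From mathcomp Require Import all_boot all_order all_algebra.
From mathcomp Require Import all_classical all_reals all_analysis.
Set Implicit Arguments. Unset Strict Implicit. Unset Printing Implicit Defensive.
Import Order.TTheory GRing.Theory Num.Theory.
Import numFieldNormedType.Exports.
Local Open Scope classical_set_scope.
Local Open Scope ring_scope.

Section BanachLattice.
Variables (R : realType) (X : completeNormedModType R).

Definition labs (join : X -> X -> X) (x : X) : X := join x (- x).

Record banach_lattice (lex : X -> X -> Prop) (join : X -> X -> X) : Prop := {
  bl_refl : forall x, lex x x;
  bl_antisym : forall x y, lex x y -> lex y x -> x = y;
  bl_trans : forall x y z, lex x y -> lex y z -> lex x z;
  bl_add : forall x y z, lex x y -> lex (x + z) (y + z);
  bl_scale : forall (a : R) x, 0 <= a -> lex 0 x -> lex 0 (a *: x);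
  bl_join_l : forall x y, lex x (join x y);
  bl_join_r : forall x y, lex y (join x y);
  bl_join_min : forall x y z, lex x z -> lex y z -> lex (join x y) z;
  bl_norm : forall x y, lex (labs join x) (labs join y) -> `|x| <= `|y|
}.

Fixpoint joinseq (join : X -> X -> X) (f : nat -> X) (k : nat) : X :=
  match k with
  | 0 => f 0%N
  | k'.+1 => join (joinseq join f k') (f k)
  end.

Definition lin_span (e : nat -> X) : set X :=
  [set x | exists (N : nat) (a : nat -> R), x = \sum_(i < N) a i *: e i].
Definition closed_span (e : nat -> X) : set X := closure (lin_span e).

Definition semi_normalized (e : nat -> X) : Prop :=
  exists c D : R, 0 < c /\ forall n, c <= `|e n| <= D.

Definition basic_sequence (e : nat -> X) : Prop :=
  forall x, closed_span e x ->
  exists! a : nat -> R,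
    (fun N : nat => \sum_(i < N) a i *: e i) @ \oo --> x.

Definition coordinate_functionals (e : nat -> X) (estar : nat -> X -> R) :=
  forall x, closed_span e x -> forall a : nat -> R,
    (fun N : nat => \sum_(i < N) a i *: e i) @ \oo --> x ->
    a = (fun n => estar n x).

Definition natural_greedy_ordering (c : nat -> R) (rho : nat -> nat) : Prop :=
  injective rho /\
  (forall k, c k != 0 -> exists j, rho j = k) /\
  (forall i j, (i < j)%N ->
     `|c (rho j)| < `|c (rho i)| \/
     (`|c (rho i)| = `|c (rho j)| /\ (rho i < rho j)%N)).

(* G_m(x) with respect to the ordering rho (rho 0 = first index) *)
Definition greedy_sum (e : nat -> X) (estar : nat -> X -> R)
  (rho : nat -> nat) (m : nat) (x : X) : X :=
  \sum_(k < m) estar (rho k) x *: e (rho k).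

(* G^vee_m(x) = \/_{n=1}^m |G_n(x)|, for m >= 1 *)
Definition greedy_vee (join : X -> X -> X) (e : nat -> X)
  (estar : nat -> X -> R) (rho : nat -> nat) (m : nat) (x : X) : X :=
  joinseq join (fun k => labs join (greedy_sum e estar rho k.+1 x)) m.-1.

Definition uqg_set (join : X -> X -> X) (e : nat -> X)
  (estar : nat -> X -> R) : set R :=
  [set r | exists (m : nat) (x : X) (rho : nat -> nat),
     (0 < m)%N /\ closed_span e x /\ `|x| = 1 /\
     natural_greedy_ordering (fun n => estar n x) rho /\
     r = `|greedy_vee join e estar rho m x|].

Definition uniformly_quasi_greedy join e estar : Prop :=
  has_ubound (uqg_set join e estar).

Definition Cqg_vee join e estar : R := sup (uqg_set join e estar).

End BanachLattice.

(* Main.v *)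
Require Import Defs.
From HB Require Import structures.
From mathcomp Require Import all_boot all_order all_algebra.
From mathcomp Require Import all_classical all_reals all_analysis.
Import Order.TTheory GRing.Theory Num.Theory.
Import numFieldNormedType.Exports.
From mathcomp Require Import zify ring lra.
Set Implicit Arguments. Unset Strict Implicit. Unset Printing Implicit Defensive.
Local Open Scope ring_scope.
Section Lat.
Variables (R : realType) (X : completeNormedModType R).
Variables (lex : X -> X -> Prop) (join : X -> X -> X).
Hypothesis HL : banach_lattice lex join.


Lemma le_sub x y : lex x y -> lex 0 (y - x).
Proof. move=> h; have := bl_add HL (- x) h; by rewrite subrr. Qed.

Lemma sub_le x y : lex 0 (y - x) -> lex x y.
Proof. move=> h; have := bl_add HL x h; by rewrite add0r subrK. Qed.

Lemma le_addl x y z : lex x y -> lex (z + x) (z + y).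
Proof. by move=> h; rewrite (addrC z x) (addrC z y); apply: (bl_add HL). Qed.

Lemma le_add2 x y u v : lex x y -> lex u v -> lex (x + u) (y + v).
Proof.
move=> h1 h2; apply: (bl_trans HL (bl_add HL u h1)); exact: le_addl.
Qed.

Lemma le_scale (a : R) x y : 0 <= a -> lex x y -> lex (a *: x) (a *: y).
Proof.
move=> a0 h; apply: sub_le; rewrite -scalerBr; apply: (bl_scale HL) => //.
exact: le_sub.
Qed.

Lemma le_opp x y : lex x y -> lex (- y) (- x).
Proof.
move=> h; apply: sub_le; rewrite opprK addrC; exact: le_sub.
Qed.

Lemma labs_ge x : lex x (labs join (x)). Proof. exact: (bl_join_l HL). Qed.
Lemma labs_geN x : lex (- x) (labs join (x)). Proof. exact: (bl_join_r HL). Qed.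

Lemma labs_ge0 x : lex 0 (labs join (x)).
Proof.
have h : lex 0 ((2:R)^-1 *: (labs join (x) + labs join (x))).
  apply: (bl_scale HL); first by rewrite invr_ge0.
  rewrite -(subrr x) addrC; exact: le_add2 (labs_geN x) (labs_ge x).
move: h; have -> : labs join x + labs join x = (2:R) *: labs join x.
  by rewrite -[X in _ = X *: _]/(1 + 1 : R) scalerDl scale1r.
by rewrite scalerA mulVf ?scale1r // pnatr_eq0.
Qed.

Lemma labs_pos x : lex 0 x -> labs join (x) = x.
Proof.
move=> h; apply: (bl_antisym HL).
  apply: (bl_join_min HL); first exact: (bl_refl HL).
  apply: (bl_trans HL _ h); rewrite -oppr0; exact: le_opp.
exact: labs_ge.
Qed.

Lemma labs0 : labs join (0) = 0.
Proof. exact/labs_pos/(bl_refl HL). Qed.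

Lemma labs_triangle x y : lex (labs join (x + y)) (labs join (x) + labs join (y)).
Proof.
apply: (bl_join_min HL); first exact: le_add2 (labs_ge x) (labs_ge y).
rewrite opprD; exact: le_add2 (labs_geN x) (labs_geN y).
Qed.

Lemma labs_N x : labs join (- x) = labs join x.
Proof.
apply: (bl_antisym HL); apply: (bl_join_min HL).
- exact: labs_geN.
- rewrite opprK; exact: labs_ge.
- have := labs_geN (- x); by rewrite opprK.
- exact: labs_ge.
Qed.

Lemma labs_sub x y : lex (labs join (x - y)) (labs join (x) + labs join (y)).
Proof. by rewrite -(labs_N y); exact: labs_triangle. Qed.

Lemma labs_scale (a : R) x : lex (labs join (a *: x)) (`|a| *: labs join (x)).
Proof.
have [a0|a0] := leP 0 a.
  rewrite ger0_norm //; apply: (bl_join_min HL); first exact: le_scale (labs_ge x).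
  by rewrite -scalerN; apply: le_scale (labs_geN x).
rewrite ltr0_norm //; apply: (bl_join_min HL).
  by rewrite -[a *: x]opprK -scalerN -scaleNr; apply: le_scale (labs_geN x); rewrite oppr_ge0 ltW.
by rewrite -scaleNr; apply: le_scale (labs_ge x); rewrite oppr_ge0 ltW.
Qed.

Lemma norm_mono x y : lex 0 x -> lex x y -> `|x| <= `|y|.
Proof.
move=> x0 xy; apply: (bl_norm HL); rewrite labs_pos // labs_pos //.
exact: (bl_trans HL x0 xy).
Qed.

Lemma joinseq_ub f K k : (k <= K)%N -> lex (f k) (joinseq join f K).
Proof.
elim: K => [|K IH]; first by rewrite leqn0 => /eqP ->; exact: (bl_refl HL).
rewrite leq_eqVlt => /orP[/eqP ->|]; first exact: (bl_join_r HL).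
rewrite ltnS => /IH h; apply: (bl_trans HL h _); exact: (bl_join_l HL).
Qed.

Lemma joinseq_le f K z : (forall k, (k <= K)%N -> lex (f k) z) ->
  lex (joinseq join f K) z.
Proof.
elim: K => [|K IH] h; first exact: h.
apply: (bl_join_min HL); last exact: h.
by apply: IH => k kK; apply: h; rewrite (leq_trans kK).
Qed.

Lemma joinseq_ge0 f K : (forall k, (k <= K)%N -> lex 0 (f k)) ->
  lex 0 (joinseq join f K).
Proof. move=> h; apply: (bl_trans HL (h 0%N (leq0n _)) _); exact: joinseq_ub. Qed.

Lemma joinseq_eq f g K : (forall k, (k <= K)%N -> f k = g k) ->
  joinseq join f K = joinseq join g K.
Proof.
elim: K => [|K IH] h /=; first exact: h.
by rewrite IH ?h // => k kK; apply: h; rewrite (leq_trans kK).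
Qed.

End Lat.
Section Greedy.
Variables (R : realType) (X : completeNormedModType R).
Variables (lex : X -> X -> Prop) (join : X -> X -> X).
Hypothesis HL : banach_lattice lex join.
Variables (e : nat -> X) (estar : nat -> X -> R).
Hypothesis Hcf : coordinate_functionals e estar.
Hypothesis Huqg : uniformly_quasi_greedy join e estar.

Definition coef (m : nat) (p : nat -> nat) (c : nat -> R) (i : nat) : R :=
  \sum_(j < m) (if p j == i then c j else 0).

Definition Ssum (p : nat -> nat) (c : nat -> R) (k : nat) : X :=
  \sum_(j < k) c j *: e (p j).

Lemma sum_coef m p c N : (forall j, (j < m)%N -> (p j < N)%N) ->
  \sum_(i < N) coef m p c i *: e i = Ssum p c m.
Proof.
move=> hp; rewrite /coef /Ssum.
under eq_bigr do rewrite scaler_suml.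
rewrite exchange_big /=; apply: eq_bigr => j _.
rewrite (bigD1 (Ordinal (hp j (ltn_ord j)))) //= eqxx big1 ?addr0 //.
move=> i /eqP hi; case: eqP => [h|_]; last by rewrite scale0r.
by exfalso; apply: hi; apply: val_inj; rewrite /= h.
Qed.

Lemma coef_p m p c j : (j < m)%N ->
  (forall i j, (i < m)%N -> (j < m)%N -> p i = p j -> i = j) ->
  coef m p c (p j) = c j.
Proof.
move=> jm hinj; rewrite /coef (bigD1 (Ordinal jm)) //= eqxx big1 ?addr0 //.
move=> i /eqP hi; case: eqP => [h|_] //.
by exfalso; apply: hi; apply: val_inj; rewrite /= (hinj _ _ (ltn_ord i) jm h).
Qed.

Lemma coef_out m p c i : (forall j, (j < m)%N -> p j != i) -> coef m p c i = 0.
Proof. by move=> h; rewrite /coef big1 // => j _; rewrite (negbTE (h j (ltn_ord j))). Qed.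

Definition bnd (m : nat) (p : nat -> nat) : nat := (\sum_(j < m) p j).+1.

Lemma bnd_gt m p j : (j < m)%N -> (p j < bnd m p)%N.
Proof.
move=> jm; rewrite /bnd ltnS (bigD1 (Ordinal jm)) //=; exact: leq_addr.
Qed.

Lemma estar_S m p c :
  (forall i j, (i < m)%N -> (j < m)%N -> p i = p j -> i = j) ->
  (fun n => estar n (Ssum p c m)) = coef m p c.
Proof.
move=> hinj; symmetry; apply: Hcf.
  apply: subset_closure; exists (bnd m p), (coef m p c).
  by rewrite sum_coef // => j; exact: bnd_gt.
apply: cvg_near_cst; near=> N.
rewrite sum_coef // => j jm; apply: (leq_trans (@bnd_gt m p j jm)).
near: N; exact: nbhs_infty_ge.
Unshelve. all: by end_near.
Qed.

End Greedy.
Section Greedy2.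
Variables (R : realType) (X : completeNormedModType R).
Variables (lex : X -> X -> Prop) (join : X -> X -> X).
Hypothesis HL : banach_lattice lex join.
Variables (e : nat -> X) (estar : nat -> X -> R).
Hypothesis Hcf : coordinate_functionals e estar.
Hypothesis Huqg : uniformly_quasi_greedy join e estar.

Definition rho (m : nat) (p : nat -> nat) (j : nat) : nat :=
  if (j < m)%N then p j else (bnd m p + (j - m))%N.

Lemma coef_rho_out m p (c : nat -> R) j : (m <= j)%N -> coef m p c (rho m p j) = 0.
Proof.
move=> mj; rewrite /rho ltnNge mj /=; apply: coef_out => i im.
by apply/eqP => h; have := bnd_gt p im; rewrite h; lia.
Qed.

Lemma rho_ngo m p (c : nat -> R) :
  (forall i j, (i < m)%N -> (j < m)%N -> p i = p j -> i = j) ->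
  (forall i, (i < m)%N -> 0 < c i) ->
  (forall i j, (i < j)%N -> (j < m)%N -> c j < c i) ->
  natural_greedy_ordering (coef m p c) (rho m p).
Proof.
move=> hinj hpos hdec; split; [|split].
- move=> i j; rewrite /rho.
  case: (ltnP i m) => im; case: (ltnP j m) => jm.
  + exact: hinj.
  + by move=> h; have := bnd_gt p im; rewrite h; lia.
  + by move=> h; have := bnd_gt p jm; rewrite -h; lia.
  + lia.
- move=> k hk; case: (boolP [exists j : 'I_m, p j == k]).
    move=> /existsP [j /eqP hj]; exists j; by rewrite /rho ltn_ord.
  move=> /existsPn hn; exfalso; move/eqP: hk; apply.
  by apply: coef_out => j jm; have := hn (Ordinal jm).
- move=> i j ij.
  case: (ltnP j m) => jm.
    have im : (i < m)%N by apply: ltn_trans ij jm.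
    left; rewrite /rho im jm !coef_p // !gtr0_norm ?hpos //; exact: hdec.
  rewrite (coef_rho_out p c jm) normr0.
  case: (ltnP i m) => im.
    by left; rewrite /rho im coef_p // normr_gt0 gt_eqF ?hpos.
  right; rewrite (coef_rho_out p c im) normr0; split => //.
  rewrite /rho (ltnNge i m) im (ltnNge j m) jm /=; lia.
Qed.

End Greedy2.
Section Greedy3.
Variables (R : realType) (X : completeNormedModType R).
Variables (lex : X -> X -> Prop) (join : X -> X -> X).
Hypothesis HL : banach_lattice lex join.
Variables (e : nat -> X) (estar : nat -> X -> R).
Hypothesis Hcf : coordinate_functionals e estar.
Hypothesis Huqg : uniformly_quasi_greedy join e estar.

Lemma G0 m p (c : nat -> R) : (0 < m)%N ->
  (forall i j, (i < m)%N -> (j < m)%N -> p i = p j -> i = j) ->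
  (forall i, (i < m)%N -> 0 < c i) ->
  (forall i j, (i < j)%N -> (j < m)%N -> c j < c i) ->
  `|Ssum e p c m| = 1 ->
  `|joinseq join (fun k => labs join (Ssum e p c k.+1)) m.-1|
    <= Cqg_vee join e estar.
Proof.
move=> m0 hinj hpos hdec hn; apply: (ub_le_sup Huqg).
exists m, (Ssum e p c m), (rho m p); split => //; split.
  apply: subset_closure; exists (bnd m p), (coef m p c).
  by rewrite sum_coef // => j; exact: bnd_gt.
split => //; rewrite (estar_S Hcf) //; split; first exact: rho_ngo.
congr (`|_|); rewrite /greedy_vee; apply: joinseq_eq => k km.
congr (labs join _); rewrite /greedy_sum /Ssum; apply: eq_bigr => j _.
have jm : (j < m)%N.
  by apply: (leq_trans (ltn_ord j)); move: km; case: (m) m0 => // m' _; rewrite ltnS.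
rewrite /rho jm.
have := congr1 (fun f => f (p j)) (estar_S Hcf c hinj); rewrite /= => ->.
by rewrite coef_p.
Qed.

End Greedy3.
Section Greedy4.
Variables (R : realType) (X : completeNormedModType R).
Variables (lex : X -> X -> Prop) (join : X -> X -> X).
Hypothesis HL : banach_lattice lex join.
Variables (e : nat -> X) (estar : nat -> X -> R).
Hypothesis Hcf : coordinate_functionals e estar.
Hypothesis Huqg : uniformly_quasi_greedy join e estar.

Lemma estar0 n : estar n 0 = 0.
Proof.
have h : (fun _ : nat => (0:R)) = (fun n => estar n 0).
  apply: Hcf.
    apply: subset_closure; exists 0%N, (fun _ => 0); by rewrite big_ord0.
  have -> : (fun N : nat => \sum_(i < N) (fun _ : nat => (0:R)) i *: e i) = (fun _ => 0).
    by apply: funext => N; rewrite big1 // => i _; rewrite scale0r.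
  exact: cvg_cst.
by have := congr1 (fun f => f n) h.
Qed.

Lemma Ssum_scale p (c : nat -> R) (t : R) k :
  Ssum e p (fun j => c j * t) k = t *: Ssum e p c k.
Proof.
rewrite /Ssum scaler_sumr; apply: eq_bigr => j _; by rewrite scalerA mulrC.
Qed.

Lemma G m p (c : nat -> R) : (0 < m)%N ->
  (forall i j, (i < m)%N -> (j < m)%N -> p i = p j -> i = j) ->
  (forall i, (i < m)%N -> 0 < c i) ->
  (forall i j, (i < j)%N -> (j < m)%N -> c j < c i) ->
  `|joinseq join (fun k => labs join (Ssum e p c k.+1)) m.-1|
    <= Cqg_vee join e estar * `|Ssum e p c m|.
Proof.
move=> m0 hinj hpos hdec.
set r := `|Ssum e p c m|.
have rpos : 0 < r.
  rewrite normr_gt0; apply/eqP => h0.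
  have := congr1 (fun f => f (p 0%N)) (estar_S Hcf c hinj).
  by rewrite /= h0 estar0 coef_p // => /esym/eqP; rewrite gt_eqF // hpos.
set c' := fun j => c j * r^-1.
have hS k : Ssum e p c' k = r^-1 *: Ssum e p c k by rewrite Ssum_scale.
have h1 := G0 Hcf Huqg (p := p) (c := c') m0 hinj.
have /h1 {h1} h1 : forall i, (i < m)%N -> 0 < c' i.
  by move=> i im; rewrite /c' divr_gt0 ?hpos.
have /h1 {h1} h1 : forall i j, (i < j)%N -> (j < m)%N -> c' j < c' i.
  by move=> i j ij jm; rewrite /c' ltr_pM2r ?invr_gt0 // hdec.
have /h1 {h1} h1 : `|Ssum e p c' m| = 1.
  by rewrite hS normrZ ger0_norm ?invr_ge0 ?ltW // mulVf // gt_eqF.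
set J' := joinseq _ _ _ in h1.
have hle : lex (joinseq join (fun k => labs join (Ssum e p c k.+1)) m.-1) (r *: J').
  apply: joinseq_le => // k km.
  have -> : Ssum e p c k.+1 = r *: Ssum e p c' k.+1.
    by rewrite hS scalerA mulfV ?scale1r // gt_eqF.
  apply: (bl_trans HL (labs_scale HL _ _)); rewrite (ger0_norm (ltW rpos)).
  apply: (le_scale HL (ltW rpos)).
  exact: (joinseq_ub HL (fun k => labs join (Ssum e p c' k.+1)) km).
apply: (le_trans (norm_mono HL (joinseq_ge0 HL (fun k _ => labs_ge0 HL _)) hle)).
by rewrite normrZ (ger0_norm (ltW rpos)) mulrC ler_pM2r.
Qed.

End Greedy4.
Section Greedy5.
Variables (R : realType) (X : completeNormedModType R).
Variables (lex : X -> X -> Prop) (join : X -> X -> X).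
Hypothesis HL : banach_lattice lex join.
Variables (e : nat -> X) (estar : nat -> X -> R).
Hypothesis Hcf : coordinate_functionals e estar.
Hypothesis Huqg : uniformly_quasi_greedy join e estar.

Lemma Spos m p (c : nat -> R) : (0 < m)%N ->
  (forall i j, (i < m)%N -> (j < m)%N -> p i = p j -> i = j) ->
  (forall i, (i < m)%N -> 0 < c i) -> 0 < `|Ssum e p c m|.
Proof.
move=> m0 hinj hpos.
rewrite normr_gt0; apply/eqP => h0.
have := congr1 (fun f => f (p 0%N)) (estar_S Hcf c hinj).
by rewrite /= h0 (estar0 Hcf) coef_p // => /esym/eqP; rewrite gt_eqF // hpos.
Qed.

Lemma C_ge0 : 0 <= Cqg_vee join e estar.
Proof.
have h1 := G HL Hcf Huqg (m := 1) (p := fun _ => 0%N) (c := fun _ => 1) (ltn0Sn 0).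
have /h1 {h1} h1 : forall i j, (i < 1)%N -> (j < 1)%N -> 0%N = 0%N -> i = j.
  by case=> [|?] [|?].
have /h1 {h1} h1 : forall i, (i < 1)%N -> (0:R) < 1 by [].
have /h1 {h1} h1 : forall i j, (i < j)%N -> (j < 1)%N -> (1:R) < 1.
  by move=> i j ij j1; exfalso; lia.
have hp := @Spos 1 (fun _ => 0%N) (fun _ => 1) (ltn0Sn 0).
have /hp {hp} hp : forall i j, (i < 1)%N -> (j < 1)%N -> 0%N = 0%N -> i = j.
  by case=> [|?] [|?].
have /hp {hp} hp : forall i, (i < 1)%N -> (0:R) < 1 by [].
by rewrite -(pmulr_lge0 _ hp); exact: le_trans h1.
Qed.

End Greedy5.
Definition sB (m : nat) (B : pred nat) : seq nat :=
  [seq i <- iota 0 m | B i] ++ [seq i <- iota 0 m | predC B i].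

Lemma sB_perm m B : perm_eq (sB m B) (iota 0 m).
Proof. by rewrite /sB perm_filterC. Qed.

Lemma sB_size m B : size (sB m B) = m.
Proof. by rewrite (perm_size (sB_perm m B)) size_iota. Qed.

Lemma sB_uniq m B : uniq (sB m B).
Proof. by rewrite (perm_uniq (sB_perm m B)) iota_uniq. Qed.

Lemma sB_lt m B j : (j < m)%N -> (nth 0%N (sB m B) j < m)%N.
Proof.
move=> jm; have : nth 0%N (sB m B) j \in sB m B by rewrite mem_nth // sB_size.
by rewrite (perm_mem (sB_perm m B)) mem_iota.
Qed.

Lemma sB_take m B k : (k < m)%N ->
  take (count B (iota 0 k.+1)) (sB m B) = [seq i <- iota 0 k.+1 | B i].
Proof.
move=> km; rewrite /sB -(subnKC km) iotaD filter_cat -catA take_size_cat //.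
by rewrite size_filter.
Qed.

Lemma sum_B (R : realType) (X : completeNormedModType R) (f : nat -> X) m (B : pred nat) k : (k < m)%N ->
  \sum_(i < k.+1) (if B i then 1 else 0 : R) *: f i =
  \sum_(j < count B (iota 0 k.+1)) f (nth 0%N (sB m B) j).
Proof.
move=> km.
transitivity (\sum_(i < k.+1 | B i) f i).
  by rewrite [RHS]big_mkcond; apply: eq_bigr => i _; case: (B i); rewrite ?scale1r ?scale0r.
rewrite -big_mkord /index_iota subn0 -big_filter -(sB_take B km).
rewrite (big_nth 0%N) big_mkord.
have hs : size (take (count B (iota 0 k.+1)) (sB m B)) = count B (iota 0 k.+1).
  by rewrite sB_take // size_filter.
rewrite hs; apply: eq_bigr => j _; by rewrite nth_take.
Qed.

Lemma le_eps (R : realType) (x y M : R) : 0 <= M ->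
  (forall eta, 0 < eta -> x <= y + eta * M) -> x <= y.
Proof.
move=> M0 h; apply/ler_addgt0Pr => eps eps0.
have hp : 0 < eps / (M + 1) by rewrite divr_gt0 // ltr_wpDl.
apply: (le_trans (h _ hp)); rewrite lerD2l.
rewrite mulrAC ler_pdivrMr ?ltr_wpDl // ler_pM2l //.
by rewrite lerDl.
Qed.
Section VB.
Variables (R : realType) (X : completeNormedModType R).
Variables (lex : X -> X -> Prop) (join : X -> X -> X).
Hypothesis HL : banach_lattice lex join.
Variables (e : nat -> X) (estar : nat -> X -> R).
Hypothesis Hcf : coordinate_functionals e estar.
Hypothesis Huqg : uniformly_quasi_greedy join e estar.

Lemma reindex_sB m B (f : nat -> X) :
  \sum_(j < m) f (nth 0%N (sB m B) j) = \sum_(i < m) f i.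
Proof.
rewrite -(big_mkord (fun _ => true) f) /index_iota subn0 -(perm_big _ (sB_perm m B)).
by rewrite (big_nth 0%N) sB_size big_mkord.
Qed.

Lemma VB m n (B : pred nat) : (0 < m)%N ->
  (forall i j, (i < m)%N -> (j < m)%N -> n i = n j -> i = j) ->
  `|joinseq join (fun k => labs join (Ssum e n (fun i => if B i then 1 else 0) k.+1)) m.-1|
    <= Cqg_vee join e estar * `|\sum_(i < m) e (n i)|.
Proof.
move=> m0 hinj.
set C := Cqg_vee join e estar.
have C0 : 0 <= C := C_ge0 HL Hcf Huqg.
set p := fun j => n (nth 0%N (sB m B) j).
have hinjp : forall i j, (i < m)%N -> (j < m)%N -> p i = p j -> i = j.
  move=> i j im jm /(hinj _ _ (sB_lt B im) (sB_lt B jm)) /eqP.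
  by rewrite nth_uniq ?sB_size ?sB_uniq // => /eqP.
set K := \sum_(j < m) (m - j)%:R * `|e (p j)|.
have K0 : 0 <= K by apply: sumr_ge0 => j _; rewrite mulr_ge0.
apply: (@le_eps _ _ _ (C *+ 2 * K)); first by rewrite mulr_ge0 // mulrn_wge0.
move=> eta eta0.
set d := fun j : nat => eta * (m - j)%:R.
set c := fun j : nat => 1 + d j.
have dpos : forall i, (i < m)%N -> 0 < d i.
  by move=> i im; rewrite /d mulr_gt0 // ltr0n subn_gt0.
have ddec : forall i j, (i < j)%N -> (j < m)%N -> d j < d i.
  by move=> i j ij jm; rewrite /d ltr_pM2l // ltr_nat; lia.
have cpos : forall i, (i < m)%N -> 0 < c i.
  by move=> i im; rewrite /c ltr_wpDl ?ler01 ?dpos.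
have cdec : forall i j, (i < j)%N -> (j < m)%N -> c j < c i.
  by move=> i j ij jm; rewrite /c ltrD2l ddec.
have Gc := G HL Hcf Huqg m0 hinjp cpos cdec.
have Gd := G HL Hcf Huqg m0 hinjp dpos ddec.
set Jc := joinseq join _ _ in Gc.
set Jd := joinseq join _ _ in Gd.
have hSc : forall J, Ssum e p c J = \sum_(j < J) e (p j) + Ssum e p d J.
  by move=> J; rewrite /Ssum -big_split; apply: eq_bigr => j _; rewrite scalerDl scale1r.
have hle : lex (joinseq join (fun k => labs join (Ssum e n (fun i => if B i then 1 else 0) k.+1)) m.-1) (Jc + Jd).
  apply: joinseq_le => // k km.
  have km' : (k < m)%N by move: km; case: (m) m0 => // m' _.
  rewrite /Ssum (@sum_B _ _ (fun i => e (n i)) m B k km').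
  have : (count B (iota 0 k.+1) <= m)%N.
    by apply: (leq_trans (count_size _ _)); rewrite size_iota.
  case: (count B (iota 0 k.+1)) => [|J] Jm.
    rewrite big_ord0 (labs0 HL).
    have h0 := le_add2 HL (joinseq_ge0 HL (f := fun k => labs join (Ssum e p c k.+1)) (K := m.-1) (fun k _ => labs_ge0 HL _))
       (joinseq_ge0 HL (f := fun k => labs join (Ssum e p d k.+1)) (K := m.-1) (fun k _ => labs_ge0 HL _)).
    by rewrite addr0 in h0.
  have -> : \sum_(j < J.+1) e (n (nth 0%N (sB m B) j)) = Ssum e p c J.+1 - Ssum e p d J.+1.
    by rewrite hSc addrK.
  apply: (bl_trans HL (labs_sub HL _ _)); apply: (le_add2 HL).
    by apply: (joinseq_ub HL (fun k => labs join (Ssum e p c k.+1))); move: Jm; case: (m) m0.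
  by apply: (joinseq_ub HL (fun k => labs join (Ssum e p d k.+1))); move: Jm; case: (m) m0.
have hL := norm_mono HL (joinseq_ge0 HL (fun k _ => labs_ge0 HL _)) hle.
apply: (le_trans hL); apply: (le_trans (ler_normD _ _)).
apply: (le_trans (lerD Gc Gd)).
have hd : `|Ssum e p d m| <= eta * K.
  rewrite /K mulr_sumr; apply: (le_trans (ler_norm_sum _ _ _)).
  apply: ler_sum => j _; rewrite normrZ mulrA ger0_norm //.
  by rewrite mulr_ge0 // ltW.
have hc : `|Ssum e p c m| <= `|\sum_(i < m) e (n i)| + `|Ssum e p d m|.
  by rewrite hSc (reindex_sB m B (fun i => e (n i))); exact: ler_normD.
have h1 := ler_wpM2l C0 hc.
have h2 := ler_wpM2l C0 hd.
rewrite mulrDr in h1.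
rewrite -mulr_natr.
move: h1 h2; set a := `|Ssum e p c m|; set b := `|Ssum e p d m|; set A := `|_|.
rewrite -/C; move=> h1 h2; nra.
Qed.
End VB.
Lemma exmin (R : realType) (b : nat -> R) (P : pred nat) m :
  (exists i, (i < m)%N /\ P i) ->
  exists i0, [/\ (i0 < m)%N, P i0 & forall i, (i < m)%N -> P i -> b i0 <= b i].
Proof.
elim: m => [|m IH]; first by case=> i [].
move=> [i [im Pi]].
case: (boolP [exists j : 'I_m, P j]) => [/existsP [j Pj]|/existsPn hn].
  have [i0 [i0m Pi0 hi0]] := IH (ex_intro _ (nat_of_ord j) (conj (ltn_ord j) Pj)).
  case: (boolP (P m)) => Pm.
    have [lt|ge] := ltP (b m) (b i0).
      exists m; split => // k; rewrite ltnS leq_eqVlt => /orP[/eqP ->|km] Pk //.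
      by apply: (le_trans (ltW lt)); exact: hi0.
    exists i0; split => //; first exact: ltnW.
    move=> k; rewrite ltnS leq_eqVlt => /orP[/eqP ->|km] Pk //; exact: hi0.
  exists i0; split => //; first exact: ltnW.
  move=> k; rewrite ltnS leq_eqVlt => /orP[/eqP ->|km] Pk; last exact: hi0.
  by rewrite Pk in Pm.
have im' : i = m.
  move: im; rewrite ltnS leq_eqVlt => /orP[/eqP //|ilt].
  by have := hn (Ordinal ilt); rewrite Pi.
subst i; exists m; split => // k; rewrite ltnS leq_eqVlt => /orP[/eqP ->|km] Pk //.
by have := hn (Ordinal km); rewrite Pk.
Qed.

Lemma count_lt (P Q : pred nat) (s : seq nat) i0 :
  (forall i, i \in s -> Q i -> P i) -> i0 \in s -> P i0 -> ~~ Q i0 ->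
  (count Q s < count P s)%N.
Proof.
move=> hsub i0s Pi0 Qi0.
have h := count_predC Q [seq x <- s | P x].
rewrite size_filter !count_filter in h.
have e1 : count (predI Q P) s = count Q s.
  by apply: eq_in_count => i his; rewrite /= andb_idr // => /hsub; apply.
rewrite e1 in h.
rewrite -h -addn1 leq_add2l -has_count; apply/hasP; exists i0 => //=.
by rewrite Qi0 Pi0.
Qed.
Section LC.
Variables (R : realType) (X : completeNormedModType R).
Variables (lex : X -> X -> Prop) (join : X -> X -> X).
Hypothesis HL : banach_lattice lex join.
Variables (e : nat -> X) (estar : nat -> X -> R).
Hypothesis Hcf : coordinate_functionals e estar.
Hypothesis Huqg : uniformly_quasi_greedy join e estar.
Variables (m : nat) (n : nat -> nat).
Hypothesis m0 : (0 < m)%N.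
Hypothesis hinj : forall i j, (i < m)%N -> (j < m)%N -> n i = n j -> i = j.

Let W := Cqg_vee join e estar * `|\sum_(i < m) e (n i)|.
Let Lb (b : nat -> R) := joinseq join (fun k => labs join (Ssum e n b k.+1)) m.-1.
Let Mx (b : nat -> R) := \big[Num.max/0]_(i < m) b i.

Lemma W0 : 0 <= W.
Proof. by rewrite /W mulr_ge0 // (C_ge0 HL Hcf Huqg). Qed.

Lemma Lb_ge0 b : lex 0 (Lb b).
Proof. by rewrite /Lb; apply: (joinseq_ge0 HL) => k _; exact: labs_ge0. Qed.

Lemma km1 k : (k <= m.-1)%N -> (k < m)%N.
Proof. by case: (m) m0. Qed.

Lemma LC N : forall b : nat -> R, (count (fun i => b i != 0%R) (iota 0 m) <= N)%N ->
  (forall i, (i < m)%N -> 0 <= b i) -> `|Lb b| <= Mx b * W.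
Proof.
elim: N => [|N IH] b hc hb.
  have hz : forall i, (i < m)%N -> b i = 0.
    move=> i im; apply/eqP; apply: contraTT hc => hi; rewrite -ltnNge -has_count.
    by apply/hasP; exists i => //; rewrite mem_iota.
  have -> : Lb b = 0.
    apply: (bl_antisym HL); last exact: Lb_ge0.
    apply: (joinseq_le HL) => k /km1 km.
    rewrite /Ssum big1; first by rewrite (labs0 HL); exact: (bl_refl HL).
    move=> i _.
    by rewrite hz ?scale0r // (leq_trans (ltn_ord i)).
  by rewrite normr0 mulr_ge0 ?W0 // /Mx bigmax_ge_id.
case: (boolP [exists i : 'I_m, b i != 0]); last first.
  move=> /existsPn hz.
  have -> : Lb b = 0.
    apply: (bl_antisym HL); last exact: Lb_ge0.
    apply: (joinseq_le HL) => k /km1 km.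
    rewrite /Ssum big1; first by rewrite (labs0 HL); exact: (bl_refl HL).
    move=> i _.
    have im : (i < m)%N by rewrite (leq_trans (ltn_ord i)).
    by have := hz (Ordinal im); rewrite negbK => /eqP /= ->; rewrite scale0r.
  by rewrite normr0 mulr_ge0 ?W0 // /Mx bigmax_ge_id.
move=> /existsP [i1 hi1].
have [i0 [i0m hi0 hmin]] := exmin b (P := fun i => b i != 0)
   (ex_intro _ (nat_of_ord i1) (conj (ltn_ord i1) hi1)).
set t := b i0.
have t0 : 0 < t by rewrite lt_def hi0 hb.
set B : pred nat := fun i => b i != 0.
set b' := fun i => b i - t * (if B i then 1 else 0).
have hb' : forall i, (i < m)%N -> 0 <= b' i.
  move=> i im; rewrite /b'; case: ifP => Bi.
    by rewrite mulr1 subr_ge0 hmin.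
  by rewrite mulr0 subr0 hb.
have hc' : (count (fun i => b' i != 0%R) (iota 0 m) <= N)%N.
  rewrite -ltnS; apply: leq_trans hc.
  apply: (count_lt (i0 := i0)).
  - move=> i _; apply: contraNN; rewrite /b' /B => /eqP ->.
    by rewrite eqxx mulr0 subr0.
  - by rewrite mem_iota.
  - exact: hi0.
  - by rewrite negbK /b' /B hi0 mulr1 subrr.
have IH' := IH b' hc' hb'.
have hS : forall k, Ssum e n b k = t *: Ssum e n (fun i => if B i then 1 else 0) k + Ssum e n b' k.
  move=> k; rewrite /Ssum scaler_sumr -big_split; apply: eq_bigr => i _.
  by rewrite scalerA /= -scalerDl /b' addrC subrK.
set L1 := joinseq join (fun k => labs join (Ssum e n (fun i => if B i then 1 else 0) k.+1)) m.-1.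
have hV : `|L1| <= W := VB HL Hcf Huqg B m0 hinj.
have hle : lex (Lb b) (t *: L1 + Lb b').
  apply: (joinseq_le HL) => k0 km; rewrite hS.
  apply: (bl_trans HL (labs_triangle HL _ _)); apply: (le_add2 HL).
    apply: (bl_trans HL (labs_scale HL _ _)); rewrite (ger0_norm (ltW t0)).
    apply: (le_scale HL (ltW t0)).
    exact: (joinseq_ub HL (fun k => labs join (Ssum e n (fun i => if B i then 1 else 0) k.+1)) km).
  exact: (joinseq_ub HL (fun k => labs join (Ssum e n b' k.+1)) km).
apply: (le_trans (norm_mono HL (Lb_ge0 b) hle)).
apply: (le_trans (ler_normD _ _)); rewrite normrZ (ger0_norm (ltW t0)).
have hM : Mx b' <= Mx b - t.
  rewrite /Mx; apply: bigmax_le.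
    rewrite subr_ge0; exact: (le_bigmax 0 (fun i : 'I_m => b i) (Ordinal i0m)).
  move=> i _; rewrite /b'; case: ifP => Bi.
    by rewrite mulr1 lerD2r; exact: (le_bigmax 0 (fun i : 'I_m => b i) i).
  move: Bi; rewrite /B => /negbT; rewrite negbK => /eqP ->.
  rewrite mulr0 subr0 subr_ge0; exact: (le_bigmax 0 (fun i : 'I_m => b i) (Ordinal i0m)).
have h2 := ler_wpM2r W0 hM.
have h1 := ler_wpM2l (ltW t0) hV.
move: h1 h2 IH'; rewrite -/(Mx b'); set u := Mx b; set v := Mx b'.
move=> h1 h2 h3; nra.
Qed.

End LC.
Lemma max_split (R : realType) (x : R) : x = Num.max x 0 - Num.max (- x) 0.
Proof.
have [h|h] := leP 0 x.
  have h' : - x <= 0 by rewrite oppr_le0.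
  by rewrite ?(max_l h) (max_r h') subr0.
have h' : 0 <= - x by rewrite oppr_ge0 ltW.
by rewrite ?(max_r (ltW h)) (max_l h') sub0r opprK.
Qed.

Theorem corollary3p22 (R : realType) (X : completeNormedModType R)
  (lex : X -> X -> Prop) (join : X -> X -> X)
  (e : nat -> X) (estar : nat -> X -> R) :
  banach_lattice lex join ->
  semi_normalized e -> basic_sequence e -> coordinate_functionals e estar ->
  uniformly_quasi_greedy join e estar ->
  forall (m : nat) (n : nat -> nat) (a : nat -> R),
    (0 < m)%N ->
    (forall i j, (i < m)%N -> (j < m)%N -> n i = n j -> i = j) ->
    `| joinseq join (fun k => labs join (\sum_(i < k.+1) a i *: e (n i))) m.-1 |
    <= 2 * (\big[Num.max/0]_(i < m) `|a i|) * Cqg_vee join e estar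
         * `| \sum_(i < m) e (n i) |.
Proof.
move=> HL _ _ Hcf Huqg m n a m0 hinj.
change (`|joinseq join (fun k => labs join (Ssum e n a k.+1)) m.-1| <=
  2 * (\big[Num.max/0]_(i < m) `|a i|) * Cqg_vee join e estar * `|\sum_(i < m) e (n i)|).
set ap := fun i => Num.max (a i) 0.
set am := fun i => Num.max (- a i) 0.
have hcnt (b : nat -> R) : (count (fun i => b i != 0%R) (iota 0 m) <= m)%N.
  by apply: (leq_trans (count_size _ _)); rewrite size_iota.
have ap0 i : 0 <= ap i by rewrite /ap le_max lexx orbT.
have am0 i : 0 <= am i by rewrite /am le_max lexx orbT.
have hp := LC HL Hcf Huqg m0 hinj (hcnt ap) (fun i _ => ap0 i).
have hm := LC HL Hcf Huqg m0 hinj (hcnt am) (fun i _ => am0 i).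
have hS k : Ssum e n a k = Ssum e n ap k - Ssum e n am k.
  rewrite /Ssum -sumrB; apply: eq_bigr => i _.
  by rewrite -scalerBl /ap /am -max_split.
set Lp := joinseq join (fun k => labs join (Ssum e n ap k.+1)) m.-1 in hp.
set Lm := joinseq join (fun k => labs join (Ssum e n am k.+1)) m.-1 in hm.
have hle : lex (joinseq join (fun k => labs join (Ssum e n a k.+1)) m.-1) (Lp + Lm).
  apply: (joinseq_le HL) => k km; rewrite hS.
  apply: (bl_trans HL (labs_sub HL _ _)); apply: (le_add2 HL).
    exact: (joinseq_ub HL (fun k => labs join (Ssum e n ap k.+1)) km).
  exact: (joinseq_ub HL (fun k => labs join (Ssum e n am k.+1)) km).
have hge : lex 0 (joinseq join (fun k => labs join (Ssum e n a k.+1)) m.-1).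
  by apply: (joinseq_ge0 HL) => k _; exact: labs_ge0.
apply: (le_trans (norm_mono HL hge hle)).
apply: (le_trans (ler_normD _ _)).
set M := \big[Num.max/0]_(i < m) `|a i|.
have hMp : \big[Num.max/0]_(i < m) ap i <= M.
  apply: bigmax_le; first exact: (bigmax_ge_id _ 0 _ (fun i : 'I_m => `|a i|)).
  move=> i _; rewrite /ap ge_max; apply/andP; split.
    exact: (le_trans (ler_norm (a i)) (le_bigmax 0 (fun i : 'I_m => `|a i|) i)).
  exact: (bigmax_ge_id _ 0 _ (fun i : 'I_m => `|a i|)).
have hMm : \big[Num.max/0]_(i < m) am i <= M.
  apply: bigmax_le; first exact: (bigmax_ge_id _ 0 _ (fun i : 'I_m => `|a i|)).
  move=> i _; rewrite /am ge_max; apply/andP; split.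
    apply: (le_trans _ (le_bigmax 0 (fun i : 'I_m => `|a i|) i)) => /=.
    by rewrite -normrN ler_norm.
  exact: (bigmax_ge_id _ 0 _ (fun i : 'I_m => `|a i|)).
have C0 := C_ge0 HL Hcf Huqg.
have W0 : 0 <= Cqg_vee join e estar * `|\sum_(i < m) e (n i)| by rewrite mulr_ge0.
have h1 := ler_wpM2r W0 hMp.
have h2 := ler_wpM2r W0 hMm.
move: hp hm h1 h2; set W := Cqg_vee join e estar * `|\sum_(i < m) e (n i)|.
rewrite -!mulrA -/W.
set u := \big[Num.max/0]_(i < m) ap i; set v := \big[Num.max/0]_(i < m) am i.
move=> hp hm h1 h2; nra.
Qed.
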